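(* Let $F$ be a graph of diameter $2$, $n=|V(F)|$, $t=\delta(F)$, and let $l>n$ be an integer. If $C_{l-1}^{n-1}>n!\,C_{l-1}^{n-t-1}$, then $f_{2l}<z_1$.
   Context: All graphs are simple, finite, undirected. The $F$-degree of a vertex $v$ in $G$ is the number of subgraphs of $G$ (not necessarily induced) isomorphic to $F$ and containing $v$. $A_{2l-1}$ is the graph with vertex set $\{1,\dots,2l-1\}$ in which distinct $i,j$ are adjacent iff $|i-j|\le l-1$; $F_{2l}$ is obtained from $A_{2l-1}$ by adding a new vertex $2l$ joined exactly to $1,\dots,t$. $z_1$ is the $F$-degree of vertex $1$ in $A_{2l-1}$ and $f_{2l}$ the $F$-degree of vertex $2l$ in $F_{2l}$. $C_m^k=\frac{m!}{k!(m-k)!}$ for integers $m\ge k\ge 0$, and $C_m^k=0$ otherwise. *)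

(* Defs.v *)
From mathcomp Require Import all_boot.
Set Implicit Arguments. Unset Strict Implicit. Unset Printing Implicit Defensive.

(* A simple graph on a finType V is a symmetric irreflexive relation g : rel V.
   A (not necessarily induced) subgraph of the host graph (V,g) is a pair
   (S, E) with S : {set V} its vertex set and E : {set {set V}} its edge set,
   each edge being a 2-subset {x,y} of S with g x y. *)
Definition is_copy (V T : finType) (g : rel V) (e : rel T)
    (p : {set V} * {set {set V}}) : bool :=
  [forall A in p.2, [exists x, exists y,
      [&& x \in p.1, y \in p.1, x != y, g x y & A == [set x; y]]]] &&
  [exists f : {ffun T -> V},
      [&& injectiveb f, f @: [set: T] == p.1 &
          [forall x, forall y, e x y == ([set f x; f y] \in p.2)]]].

(* F-degree of the vertex with (0-based) index v of a host graph on 'I_m: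
   number of subgraphs isomorphic to F containing that vertex. *)
Definition Fdeg_at (m : nat) (g : rel 'I_m) (T : finType) (e : rel T) (v : nat) : nat :=
  #|[set p : {set 'I_m} * {set {set 'I_m}} |
       is_copy g e p && [exists u in p.1, nat_of_ord u == v]]|.

(* A_{2l-1}: vertices 1..2l-1 represented by 0-based indices 0..2l-2. *)
Definition A_adj (l : nat) : rel 'I_((2 * l).-1) :=
  fun i j => [&& i != j, i - j <= l.-1 & j - i <= l.-1].

(* F_{2l}: vertices 1..2l represented by 0..2l-1; the new vertex 2l is index
   2l-1, adjacent exactly to the vertices 1..t (indices 0..t-1). *)
Definition F_adj (l t : nat) : rel 'I_(2 * l) :=
  fun i j => (i != j) &&
    (if nat_of_ord i == (2 * l).-1 then j < t
     else if nat_of_ord j == (2 * l).-1 then i < t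
     else (i - j <= l.-1) && (j - i <= l.-1)).

Definition z1 (T : finType) (e : rel T) (l : nat) : nat := @Fdeg_at _ (@A_adj l) T e 0.
Definition f2l (T : finType) (e : rel T) (l t : nat) : nat :=
  @Fdeg_at _ (@F_adj l t) T e (2 * l).-1.

Definition diam2 (T : finType) (e : rel T) : Prop :=
  (forall x y, x != y -> ~~ e x y -> exists z, e x z && e z y) /\
  (exists x y, x != y /\ ~~ e x y).

Definition mindeg (T : finType) (e : rel T) (t : nat) : Prop :=
  (exists x, #|[set y | e x y]| = t) /\ (forall x, t <= #|[set y | e x y]|).

(* Main.v *)
Require Import Defs.
From mathcomp Require Import all_boot zify.
Set Implicit Arguments. Unset Strict Implicit. Unset Printing Implicit Defensive.

Definition Phi (V T : finType) (e : rel T) (f : {ffun T -> V}) : {set V} * {set {set V}} :=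
  (f @: [set: T], (fun xy : T * T => [set f xy.1; f xy.2]) @: [set xy : T * T | e xy.1 xy.2]).

Lemma copy_char (V T : finType) (g : rel V) (e : rel T) (gsym : symmetric g)
  (eirr : irreflexive e) p : is_copy g e p ->
  exists f : {ffun T -> V}, [/\ injective f, p = Phi e f & forall x y, e x y -> g (f x) (f y)].
Proof.
case/andP => /forallP H1 /existsP [f /and3P [/injectiveP finj /eqP im /forallP H3]].
have H3' x y : e x y = ([set f x; f y] \in p.2) by apply/eqP; move/forallP: (H3 x).
exists f; split => //.
  case: p H1 H3 H3' im => S E H1 H3 H3' /= im; rewrite /Phi im; congr pair.
  apply/setP => A; apply/idP/imsetP => [AE|[[x y] /= + ->]]; last by rewrite inE /= H3'.
  have := implyP (H1 A) AE; case/existsP => x' /existsP [y' /and5P [hx hy _ _ /eqP Aeq]].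
  move: hx hy; rewrite /= -im => /imsetP [x _ ex] /imsetP [y _ ey].
  exists (x, y); last by rewrite Aeq ex ey.
  by rewrite inE /= H3' /= -ex -ey -Aeq.
move=> x y exy; have hxy : x != y by apply: contraTneq exy => ->; rewrite eirr.
move: exy; rewrite H3' => /(implyP (H1 _)) /existsP [x' /existsP [y' /and5P [_ _ nxy gxy /eqP E]]].
have fx : f x \in [set x'; y'] by rewrite -E set21.
have fy : f y \in [set x'; y'] by rewrite -E set22.
have fne : f x != f y by rewrite (inj_eq finj).
move: fx fy fne => /set2P [] -> /set2P [] -> //; rewrite ?eqxx // => _.
by rewrite gsym.
Qed.

Lemma copy_mk (V T : finType) (g : rel V) (e : rel T) (esym : symmetric e)
  (eirr : irreflexive e) (f : {ffun T -> V}) : injective f ->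
  (forall x y, e x y -> g (f x) (f y)) -> is_copy g e (Phi e f).
Proof.
move=> finj hg; apply/andP; split.
  apply/forallP => A; apply/implyP => /imsetP [[x y] /=]; rewrite inE /= => exy ->.
  have hxy : x != y by apply: contraTneq exy => ->; rewrite eirr.
  apply/existsP; exists (f x); apply/existsP; exists (f y).
  by rewrite !imset_f ?inE // (inj_eq finj) hxy hg /=.
apply/existsP; exists f; rewrite /= eqxx /=; apply/andP; split; first exact/injectiveP.
apply/forallP => x; apply/forallP => y; apply/eqP.
apply/idP/imsetP => [exy|[[x' y'] /=]]; first by exists (x, y); rewrite ?inE.
rewrite inE /= => exy' E.
have hxy' : x' != y' by apply: contraTneq exy' => ->; rewrite eirr.
have a1 : x' = x \/ x' = y.
  have : f x' \in [set f x; f y] by rewrite E set21.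
  by case/set2P => /finj; auto.
have a2 : y' = x \/ y' = y.
  have : f y' \in [set f x; f y] by rewrite E set22.
  by case/set2P => /finj; auto.
have a3 : x = x' \/ x = y'.
  have : f x \in [set f x'; f y'] by rewrite -E set21.
  by case/set2P => /finj; auto.
case: a3 => ?; subst.
  case: a2 => ?; subst; first by rewrite eqxx in hxy'.
  done.
case: a1 => ?; subst; first by rewrite eqxx in hxy'.
by rewrite esym.
Qed.
Lemma card_seg m a b : b <= m -> #|[set i : 'I_m | a <= i < b]| = b - a.
Proof.
elim: b => [_|b IH hb].
  by apply/eqP; rewrite cards_eq0; apply/eqP/setP => i; rewrite !inE ltn0 andbF.
have [hab|hba] := leqP a b.
  have -> : [set i : 'I_m | a <= i < b.+1] = Ordinal hb |: [set i : 'I_m | a <= i < b].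
    apply/setP => i; rewrite !inE -val_eqE /=; case: (ltngtP i b) => h; rewrite ?h ?andbT ?andbF /=; try lia.
  rewrite cardsU1 IH ?(ltnW hb) // inE /= ltnn andbF /=; lia.
have -> : b.+1 - a = 0 by lia. apply/eqP; rewrite cards_eq0; apply/eqP/setP => i; rewrite !inE.
apply/negbTE; apply/negP => /andP [h1 h2]; lia.
Qed.

Lemma bij_ex (V T : finType) (S : {set V}) : #|T| = #|S| ->
  exists f : {ffun T -> V}, injective f /\ f @: [set: T] = S.
Proof.
move=> H; exists [ffun x => enum_val (cast_ord H (enum_rank x))].
have finj : injective [ffun x => enum_val (cast_ord H (enum_rank x))].
  by move=> x y; rewrite !ffunE => /enum_val_inj /cast_ord_inj /enum_rank_inj.
split => //; apply/eqP; rewrite eqEcard card_imset // cardsT {2}H leqnn andbT.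
by apply/subsetP => v /imsetP [x _ ->]; rewrite ffunE; apply: enum_valP.
Qed.

Lemma F_sym (l t : nat) : symmetric (@F_adj l t).
Proof.
move=> i j; rewrite /F_adj eq_sym; case: (j =P i) => //= nij.
case hi: (nat_of_ord i == _); case hj: (nat_of_ord j == _) => //=; last by rewrite andbC.
exfalso; apply: nij; apply: val_inj => /=; by rewrite (eqP hi) (eqP hj).
Qed.

Lemma f2l_ub (T : finType) (e : rel T) (n t l : nat)
  (esym : symmetric e) (eirr : irreflexive e)
  (hd : forall x y, x != y -> ~~ e x y -> exists z, e x z && e z y)
  (hn : #|T| = n) (ht : mindeg e t) (htn : t < n) (hl : n < l) :
  f2l e l t <= n`! * 'C(l.-1, n - t - 1).
Proof.
rewrite /f2l /Fdeg_at.
set V := 'I_(2 * l).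
have hv : (2 * l).-1 < 2 * l by lia.
pose vtop : V := Ordinal hv.
pose L0 := [set i : V | 0 <= i < t].
pose vL0 := vtop |: L0.
pose W := [set i : V | t <= i < t + l.-1].
have cL0 : #|L0| = t by rewrite card_seg ?subn0 //; lia.
have nv : vtop \notin L0 by apply/negP; rewrite inE /= => h; lia.
have cvL0 : #|vL0| = t.+1 by rewrite cardsU1 cL0 nv.
have cW : #|W| = l.-1 by rewrite card_seg; lia.
have dis : vL0 :&: W = set0.
  apply/setP => i; rewrite !inE -val_eqE /=; apply/negP => h; lia.
pose Allowed := [set S : {set V} | [&& vL0 \subset S, S \subset vL0 :|: W & #|S| == n]].
pose P2 := [set p : {set V} * {set {set V}} | is_copy (@F_adj l t) e p &&
                 [exists u in p.1, nat_of_ord u == (2 * l).-1]].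
have claim1 : forall p, p \in P2 -> p.1 \in Allowed.
  move=> p; rewrite inE => /andP [hc /existsP [u /andP [hu /eqP hu2]]].
  have [f [finj pE gF]] := copy_char (@F_sym l t) eirr hc.
  move: hu; rewrite pE /= => /imsetP [x0 _ hx0].
  have fx0 : nat_of_ord (f x0) = (2*l).-1 by rewrite -hx0.
  have fx0v : f x0 = vtop by apply: val_inj.
  pose N := [set y | e x0 y].
  have tN : t <= #|N| by case: ht => _ /(_ x0).
  have fN : forall y, e x0 y -> f y < t.
    move=> y h; have := gF _ _ h; rewrite /F_adj fx0 eqxx /=; by case/andP.
  have fNL : f @: N = L0.
    apply/eqP; rewrite eqEcard card_imset // cL0 tN andbT.
    by apply/subsetP => v /imsetP [y hy ->]; rewrite inE leq0n fN //; rewrite inE in hy.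
  rewrite inE; apply/and3P; split.
  - apply/subsetP => v; rewrite in_setU1 => /orP [/eqP -> | hvv].
      by rewrite -fx0v imset_f.
    by rewrite -fNL in hvv; move/imsetP: hvv => [y _ ->]; rewrite imset_f.
  - apply/subsetP => v /imsetP [y _ ->].
    case: (y =P x0) => [->|nyx]; first by rewrite fx0v !inE eqxx.
    case eyx: (e x0 y); first by rewrite in_setU in_setU1 inE leq0n fN ?orbT.
    have nxy : x0 != y by apply/eqP => h; apply: nyx; rewrite h.
    have [z /andP [ez ezy]] := hd x0 y nxy (negbT eyx).
    have fzt := fN z ez.
    have fyv : (nat_of_ord (f y) == (2*l).-1) = false.
      apply/negbTE/eqP => h; apply: nyx; apply: finj; apply: val_inj; by rewrite /= h fx0.
    have fzv : (nat_of_ord (f z) == (2*l).-1) = false by apply/negbTE/eqP => h; lia.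
    have := gF _ _ ezy; rewrite /F_adj fzv fyv => /andP [_ /andP [h1 h2]].
    rewrite !inE -val_eqE /=; rewrite fyv /=; move: h1 h2 fzt; move: (nat_of_ord (f y)) (nat_of_ord (f z)) => a b; lia.
  - by rewrite card_imset // cardsT hn.
have claim2 : forall S, S \in Allowed -> #|[set p in P2 | p.1 == S]| <= n`!.
  move=> S hS; have := hS; rewrite inE => /and3P [_ _ /eqP cS].
  apply: (@leq_trans #|Phi e @: [set f : {ffun T -> V} in ffun_on (mem S) | injectiveb f]|).
    apply: subset_leq_card; apply/subsetP => p; rewrite inE => /andP [hp /eqP p1S].
    move: hp; rewrite inE => /andP [hc _].
    have [f [finj pE _]] := copy_char (@F_sym l t) eirr hc.
    apply/imsetP; exists f => //; rewrite inE; apply/andP; split; last exact/injectiveP.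
    by apply/ffun_onP => x; rewrite -p1S pE /= imset_f ?inE.
  apply: leq_trans (leq_imset_card _ _) _.
  by rewrite card_inj_ffuns_on cS hn ffactnn.
have claim3 : #|Allowed| <= 'C(l.-1, n - t - 1).
  have Sdec : forall S, S \in Allowed -> S = vL0 :|: (S :&: W).
    move=> S; rewrite inE => /and3P [h1 h2 _]; apply/setP => x; rewrite in_setU in_setI.
    case hx: (x \in vL0) => /=; first exact: (subsetP h1).
    case hS: (x \in S) => //=; have := subsetP h2 x hS; by rewrite in_setU hx.
  have cSW : forall S, S \in Allowed -> #|S :&: W| = n - t - 1.
    move=> S hS; have := hS; rewrite inE => /and3P [_ _ /eqP cS].
    have := cardsU vL0 (S :&: W); rewrite -Sdec // cS cvL0.
    rewrite setICA dis setI0 cards0; rewrite subn0 => ->; move: (#|S :&: W|) => k; lia.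
  rewrite -cW -cards_draws -(@card_in_imset _ _ (fun S => S :&: W) Allowed).
    apply: subset_leq_card; apply/subsetP => A /imsetP [S hS EA].
    by rewrite EA inE subsetIr (cSW _ hS) eqxx.
  by move=> S1 S2 h1 h2 /= E; rewrite (Sdec _ h1) (Sdec _ h2) E.
change (#|P2| <= n`! * 'C(l.-1, n - t - 1)).
rewrite -sum1_card (partition_big (fun p => p.1) (mem Allowed)) //=.
apply: (@leq_trans (\sum_(S in Allowed) n`!)).
  apply: leq_sum => S hS; rewrite sum1dep_card; apply: leq_trans (claim2 S hS).
  by apply: subset_leq_card; apply/subsetP => p; rewrite !inE.
by rewrite sum_nat_const mulnC leq_mul2l claim3 orbT.
Qed.

Lemma z1_lb (T : finType) (e : rel T) (n l : nat)
  (esym : symmetric e) (eirr : irreflexive e)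
  (hn : #|T| = n) (n0 : 0 < n) (hl : n <= l) :
  'C(l.-1, n.-1) <= z1 e l.
Proof.
rewrite /z1 /Fdeg_at.
have l0 : 0 < (2*l).-1 by lia.
pose o : 'I_((2*l).-1) := Ordinal l0.
pose K := [set i : 'I_((2*l).-1) | 1 <= i < l].
have cK : #|K| = l.-1 by rewrite card_seg; lia.
have oK : o \notin K by rewrite inE.
pose P1 := [set p : {set 'I_((2*l).-1)} * {set {set 'I_((2*l).-1)}} |
   is_copy (@A_adj l) e p && [exists u in p.1, nat_of_ord u == 0]].
change ('C(l.-1, n.-1) <= #|P1|).
rewrite -cK -cards_draws.
apply: leq_trans (leq_imset_card (fun p => p.1 :\ o) P1).
apply: subset_leq_card; apply/subsetP => A; rewrite inE => /andP [AK /eqP cA].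
have oA : o \notin A by apply: contra oK; apply: (subsetP AK).
have [f [finj imf]] : exists f : {ffun T -> 'I_((2*l).-1)}, injective f /\ f @: [set: T] = o |: A.
  by apply: bij_ex; rewrite cardsU1 oA cA hn; lia.
have bnd : forall v, v \in o |: A -> nat_of_ord v < l.
  move=> v; rewrite in_setU1 => /orP [/eqP -> /= | /(subsetP AK)]; first lia.
  by rewrite inE => h; lia.
apply/imsetP; exists (Phi e f); last by rewrite /Phi /= imf setU1K.
rewrite inE; apply/andP; split.
  apply: copy_mk => // x y exy.
  have bx : nat_of_ord (f x) < l by apply: bnd; rewrite -imf imset_f.
  have by_ : nat_of_ord (f y) < l by apply: bnd; rewrite -imf imset_f.
  have hxy : x != y by apply: contraTneq exy => ->; rewrite eirr.
  rewrite /A_adj (inj_eq finj) hxy /=; lia.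
by apply/existsP; exists o; rewrite /Phi /= imf setU11.
Qed.

Theorem lemma8 (T : finType) (e : rel T) (n t l : nat)
  (esym : symmetric e) (eirr : irreflexive e)
  (hdiam : diam2 e) (hn : #|T| = n) (ht : mindeg e t)
  (hl : n < l)
  (hC : n`! * 'C(l.-1, n - t - 1) < 'C(l.-1, n.-1)) :
  f2l e l t < z1 e l.
Proof.
have [hd [x [y [nxy _]]]] := hdiam.
have htn : t < n.
  case: ht => [[x0 hx0] _]; rewrite -hx0 -hn.
  have pos : 0 < #|T| by apply/card_gt0P; exists x0.
  apply: (@leq_ltn_trans #|[set~ x0]|); last by rewrite cardsC1; move: #|T| pos => k; lia.
  apply: subset_leq_card; apply/subsetP => w; rewrite !inE; apply: contraTneq => ->; by rewrite eirr.
apply: leq_ltn_trans (f2l_ub esym eirr hd hn ht htn hl) _.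
apply: (leq_trans hC); apply: z1_lb => //; lia.
Qed.
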